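(* Let $1/n\ll\gamma\ll\tau\ll\varepsilon\ll\alpha\ll 1$, let $k\in\mathbb{N}$, and let $G$ be a $d$-regular digraph on $n$ vertices with $d\geq(\alpha+\varepsilon)n$. If $\mathcal{P}_k=\{V_{ij}:i,j\in[k]\}$ is a $(k^2,\tau,\gamma)$-partition of $G$, then $|V_{i*}|,|V_{*i}|\geq d-\varepsilon n/2$ for all $i\in[k]$. In particular, $\mathcal{P}_k$ is a $(k^2,\alpha+\varepsilon/2,\gamma)$-partition of $G$.
   Context: Hierarchy convention: $x\ll y$ means $x\leq f(y)$ for some implicitly given non-decreasing function $f:(0,1]\to(0,1]$; the statement asserts that such functions exist, the constants being chosen from right to left. A digraph is $d$-regular if every vertex has in- and outdegree $d$. A $k^2$-partition of $V(G)$ is a family $\{V_{ij}:i,j\in[k]\}$ of pairwise disjoint (possibly empty) sets with union $V(G)$; $V_{i*}=\bigcup_j V_{ij}$, $V_{*j}=\bigcup_i V_{ij}$. $E(A,B)$ is the set of edges $ab$ with $a\in A$, $b\in B$. Bad edges: $\mathcal{B}_k(\mathcal{P}_k,G)=\bigcup_{i\neq j}E(V_{i*},V_{*j})$. A $(k^2,\tau,\gamma)$-partition of an $n$-vertex digraph is a $k^2$-partition with $|\mathcal{B}_k(\mathcal{P}_k,G)|\leq\gamma n^2$ and $|V_{i*}|,|V_{*j}|\geq\tau n$ for all $i,j\in[k]$. *)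

(* Defs.v *)
From mathcomp Require Import all_boot all_order all_algebra.
From mathcomp Require Import reals.
Set Implicit Arguments. Unset Strict Implicit. Unset Printing Implicit Defensive.
Import Order.TTheory GRing.Theory Num.Theory.

(* A digraph on vertex set 'I_n is a loopless edge relation E : rel 'I_n
   (at most one edge in each direction u->v). *)
Definition loopless (n : nat) (E : rel 'I_n) : Prop := forall v, ~~ E v v.

Definition outdeg n (E : rel 'I_n) (v : 'I_n) : nat := #|[set u | E v u]|.
Definition indeg n (E : rel 'I_n) (v : 'I_n) : nat := #|[set u | E u v]|.

Definition regular n (E : rel 'I_n) (d : nat) : Prop :=
  forall v, outdeg E v = d /\ indeg E v = d.

Definition k2_partition n k (V : 'I_k -> 'I_k -> {set 'I_n}) : Prop :=
  (forall i j i' j', (i, j) != (i', j') -> [disjoint V i j & V i' j']) /\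
  (\bigcup_(p : 'I_k * 'I_k) V p.1 p.2 = [set: 'I_n]).

Definition Vrow n k (V : 'I_k -> 'I_k -> {set 'I_n}) (i : 'I_k) : {set 'I_n} :=
  \bigcup_(j : 'I_k) V i j.
Definition Vcol n k (V : 'I_k -> 'I_k -> {set 'I_n}) (j : 'I_k) : {set 'I_n} :=
  \bigcup_(i : 'I_k) V i j.

Definition bad_edges n k (E : rel 'I_n) (V : 'I_k -> 'I_k -> {set 'I_n})
  : {set 'I_n * 'I_n} :=
  [set p : 'I_n * 'I_n | E p.1 p.2 &&
     [exists i : 'I_k, exists j : 'I_k,
        [&& i != j, p.1 \in Vrow V i & p.2 \in Vcol V j]]].

Local Open Scope ring_scope.

Definition k2_tau_gamma_partition (R : realType) n k (E : rel 'I_n)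
  (V : 'I_k -> 'I_k -> {set 'I_n}) (tau gamma : R) : Prop :=
  k2_partition V /\
  (#|bad_edges E V|%:R <= gamma * n%:R ^+ 2) /\
  (forall i j : 'I_k, tau * n%:R <= #|Vrow V i|%:R /\ tau * n%:R <= #|Vcol V j|%:R).

(* Main.v *)
Require Import Defs.
From mathcomp Require Import all_boot all_order all_algebra.
From mathcomp Require Import reals.
From mathcomp Require Import lra.
Import Order.TTheory GRing.Theory Num.Theory.
Lemma count_out n (E : rel 'I_n) d (A B : {set 'I_n}) :
  (forall u, #|[set v | E u v]| = d) ->
  (d * #|A| <= #|A| * #|B| +
     #|[set p : 'I_n * 'I_n | (p.1 \in A) && (E p.1 p.2 && (p.2 \notin B))]|)%N.
Proof.
move=> Hd.
have -> : #|[set p : 'I_n * 'I_n | (p.1 \in A) && (E p.1 p.2 && (p.2 \notin B))]|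
   = (\sum_(u in A) #|[set v | E u v && (v \notin B)]|)%N.
  rewrite -sum1_card.
  rewrite (eq_bigl (fun p : 'I_n * 'I_n => (p.1 \in A) && (E p.1 p.2 && (p.2 \notin B)))); last first.
    by move=> p; rewrite inE.
  rewrite -(pair_big_dep (fun u => u \in A) (fun u v => E u v && (v \notin B)) (fun _ _ => 1%N)) /=.
  by apply: eq_bigr => u _; rewrite sum1_card cardsE.
rewrite (mulnC d) -!sum_nat_const -big_split /=.
rewrite (eq_bigr (fun u => #|[set v | E u v]|)); last by move=> u _; rewrite Hd.
apply: leq_sum => u _.
apply: leq_trans (leq_card_setU B _).
apply: subset_leq_card; apply/subsetP => v; rewrite !inE => Euv.
by case: (v \in B) => /=; rewrite ?Euv.
Qed.

Local Open Scope ring_scope.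

Lemma real_step (R: realFieldType) (a b d bad n t g e : R): 0 < t -> 0 < n -> 0 < e ->
 d*a <= a*b + bad -> bad <= g * n^+2 -> t * n <= a -> g <= t * e / 2 -> d - e * n / 2 <= b.
Proof.
move=> t0 n0 e0 H1 H2 H3 H4.
case: (lerP d b) => db; first by nra.
have h1 : t * n * (d - b) <= a * (d - b) by nra.
have h2 : t * n * (d - b) <= t * n * (e * n / 2) by nra.
have tn : 0 < t * n by nra.
rewrite ler_pM2l // in h2. lra.
Qed.

Lemma cover_row n k (V : 'I_k -> 'I_k -> {set 'I_n}) :
  k2_partition V -> forall v, exists i, (v \in Vrow V i) /\ exists j, v \in Vcol V j.
Proof.
move=> [_ Hc] v.
have : v \in \bigcup_(p : 'I_k * 'I_k) V p.1 p.2 by rewrite Hc inE.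
case/bigcupP => p _ Hp.
exists p.1; split; first by apply/bigcupP; exists p.2.
by exists p.2; apply/bigcupP; exists p.1.
Qed.

Lemma main_bound (R : realType) n k (E : rel 'I_n) d (V : 'I_k -> 'I_k -> {set 'I_n})
  (tau gamma eps : R) :
  (0 < n)%N -> 0 < tau -> 0 < eps -> gamma <= tau * eps / 2 ->
  regular E d -> k2_tau_gamma_partition E V tau gamma ->
  forall i : 'I_k, d%:R - eps * n%:R / 2 <= #|Vrow V i|%:R /\
                      d%:R - eps * n%:R / 2 <= #|Vcol V i|%:R.
Proof.
move=> n0 t0 e0 hg Hreg [Hp [Hb Hs]] i.
have n0' : 0 < n%:R :> R by rewrite ltr0n.
have Hcov := @cover_row n k V Hp.
set A := Vrow V i; set B := Vcol V i.
have c1 := @count_out n E d A B (fun u => (Hreg u).1).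
have c2 := @count_out n (fun u v => E v u) d B A (fun u => (Hreg u).2).
have b1 : (#|[set p : 'I_n * 'I_n | (p.1 \in A) && (E p.1 p.2 && (p.2 \notin B))]|
            <= #|bad_edges E V|)%N.
  apply: subset_leq_card; apply/subsetP => -[u v]; rewrite !inE /= => /and3P[uA Euv vB].
  rewrite Euv /=; apply/existsP; exists i.
  have [j' [_ [j vj]]] := Hcov v.
  apply/existsP; exists j; rewrite uA vj !andbT.
  by apply/eqP => eij; move: vB; rewrite /B eij vj.
have b2 : (#|[set p : 'I_n * 'I_n | (p.1 \in B) && (E p.2 p.1 && (p.2 \notin A))]|
            <= #|bad_edges E V|)%N.
  rewrite -(card_imset _ (can_inj swap_pairK)).
  apply: subset_leq_card; apply/subsetP => q /imsetP[[v u] + ->].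
  rewrite !inE /= => /and3P[vB Euv uA].
  rewrite Euv /=; apply/existsP.
  have [j [uj _]] := Hcov u.
  exists j; apply/existsP; exists i; rewrite uj /=.
  rewrite vB !andbT.
  by apply/eqP => eij; move: uA; rewrite /A -eij uj.
have [HA HB] := Hs i i.
split.
- apply: (@real_step R #|B|%:R #|A|%:R d%:R #|bad_edges E V|%:R n%:R tau gamma eps) => //.
  + rewrite -!natrM -natrD ler_nat mulnC (mulnC #|B|).
    apply: leq_trans c2 _; rewrite leq_add2l //.
- apply: (@real_step R #|A|%:R #|B|%:R d%:R #|bad_edges E V|%:R n%:R tau gamma eps) => //.
  + rewrite -!natrM -natrD ler_nat.
    apply: leq_trans c1 _; rewrite leq_add2l //.
Qed.

Theorem proposition3p8 (R : realType) :
  exists alpha0 : R, 0 < alpha0 /\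
  forall alpha : R, 0 < alpha -> alpha <= alpha0 ->
  exists eps0 : R, 0 < eps0 /\
  forall eps : R, 0 < eps -> eps <= eps0 ->
  exists tau0 : R, 0 < tau0 /\
  forall tau : R, 0 < tau -> tau <= tau0 ->
  exists gamma0 : R, 0 < gamma0 /\
  forall gamma : R, 0 < gamma -> gamma <= gamma0 ->
  exists n0 : nat,
  forall (n : nat) (k : nat) (E : rel 'I_n) (d : nat)
         (V : 'I_k -> 'I_k -> {set 'I_n}),
    (n0 <= n)%N ->
    loopless E -> regular E d ->
    (alpha + eps) * n%:R <= d%:R ->
    k2_tau_gamma_partition E V tau gamma ->
    (forall i : 'I_k, d%:R - eps * n%:R / 2 <= #|Vrow V i|%:R /\
                      d%:R - eps * n%:R / 2 <= #|Vcol V i|%:R) /\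
    k2_tau_gamma_partition E V (alpha + eps / 2) gamma.
Proof.
exists 1; split => // alpha a0 _.
exists 1; split => // eps e0 _.
exists 1; split => // tau t0 _.
exists (tau * eps / 2); split; first by apply: divr_gt0 => //; apply: mulr_gt0.
move=> gamma g0 hg.
exists 1%N => n k E d V n1 _ Hreg Hd HP.
have HM := @main_bound R n k E d V tau gamma eps n1 t0 e0 hg Hreg HP.
split => //.
case: HP => [Hp [Hb Hs]]; split => //; split => // i j.
have h1 : (alpha + eps / 2) * n%:R <= d%:R - eps * n%:R / 2 by lra.
split; [exact: le_trans h1 (HM i).1 | exact: le_trans h1 (HM j).2].
Qed.
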